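(* For every integer $d \geq 1$ there exist constants $k$ and $C$ (depending only on $d$) such that the following holds. Let $G$ be a finite solvable group of order $n$ generated by at most $d$ elements and with solvability class $r$, and let $H$ be any finite group not isomorphic to $G$. Then the count-free $(k, C\, r \log\log n + C)$-WL Version I algorithm distinguishes $G$ and $H$.
   Context: The solvability class of a solvable group $G$ is the least $\ell$ with $G^{(\ell)} = 1$, where $G^{(0)} = G$ and $G^{(i)} = [G^{(i-1)}, G^{(i-1)}]$. Count-free pebble game Version I on finite groups $G, H$ with $m$ pebble pairs $(p_i,p_i')$: if $|G| \ne |H|$ Spoiler wins at once; otherwise each round Spoiler picks up a pebble pair $(p_i, p_i')$, the winning condition is checked, Spoiler places one pebble of the pair on an element of either group, and Duplicator places the other pebble on an element of the other group. Spoiler wins when, with $g_1,\ldots,g_\ell \in G$ and $h_1,\ldots,h_\ell \in H$ the currently pebbled (corresponding) elements, the map $g_i \mapsto h_i$ is not a marked equivalence, i.e. it is not the case that for all $i,j,t$: $g_i = g_j \iff h_i = h_j$ and $g_ig_j = g_t \iff h_ih_j = h_t$. We say that the count-free $(k,r)$-WL Version I algorithm distinguishes $G$ and $H$ if Spoiler has a strategy to win the count-free Version I pebble game with $k+1$ pebble pairs within $r$ rounds (this is equivalent to the sets of colors of $k$-tuples differing after $r$ rounds of the count-free $k$-dimensional Weisfeiler–Leman Version I refinement, whose initial coloring is the marked-equivalence type of a tuple and whose refinement records the set, rather than multiset, of colors of tuples obtained by substituting one coordinate). *)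

(* Defs.v *)
From mathcomp Require Import all_boot all_fingroup all_solvable.
Set Implicit Arguments. Unset Strict Implicit. Unset Printing Implicit Defensive.
Local Open Scope group_scope.

(* A configuration of the pebble game with m pebble pairs: pair i is either
   off the board (None) or placed on (g, h) with g in G, h in H. *)
Definition config (gT hT : finGroupType) (m : nat) := 'I_m -> option (gT * hT).

Definition empty_config (gT hT : finGroupType) (m : nat) : config gT hT m :=
  fun _ => None.

Definition set_pebble (gT hT : finGroupType) (m : nat) (c : config gT hT m)
  (i : 'I_m) (x : option (gT * hT)) : config gT hT m :=
  fun j => if j == i then x else c j.

Definition marked_equiv (gT hT : finGroupType) (m : nat) (c : config gT hT m) : Prop :=
  forall (i j t : 'I_m) (gi gj gt : gT) (hi hj ht : hT),
    c i = Some (gi, hi) -> c j = Some (gj, hj) -> c t = Some (gt, ht) ->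
    (gi = gj <-> hi = hj) /\ (gi * gj = gt <-> hi * hj = ht).

(* One round: Spoiler picks up pair i, the
   winning condition is checked, Spoiler places one pebble of the pair on an
   element of either group, Duplicator places the other in the other group. *)
Fixpoint spoiler_wins (gT hT : finGroupType) (m : nat) (r : nat)
  (c : config gT hT m) : Prop :=
  match r with
  | 0 => False
  | r'.+1 =>
    exists i : 'I_m,
      let c' := set_pebble c i None in
      ~ marked_equiv c'
      \/ (exists g : gT, forall h : hT, spoiler_wins r' (set_pebble c' i (Some (g, h))))
      \/ (exists h : hT, forall g : gT, spoiler_wins r' (set_pebble c' i (Some (g, h))))
  end.

Definition cf_WL_I_distinguishes (k r : nat) (gT hT : finGroupType) : Prop :=
  #|gT| <> #|hT| \/ @spoiler_wins gT hT k.+1 r (@empty_config gT hT k.+1).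

Definition generated_by_at_most (d : nat) (gT : finGroupType) : Prop :=
  exists X : {set gT}, #|X| <= d /\ <<X>> = [set: gT].

Definition solvability_class (gT : finGroupType) (r : nat) : Prop :=
  [set: gT]^`(r) = 1 /\ forall l, [set: gT]^`(l) = 1 -> r <= l.

(* log log n, computed as floor(log2 (floor (log2 n))) (0 for n < 4). *)
Definition loglog (n : nat) : nat := trunc_log 2 (trunc_log 2 n).

(* Main.v *)
Require Import Defs.
From mathcomp Require Import all_boot all_fingroup all_solvable.
From mathcomp Require Import zify.
From Stdlib Require Import Classical FunctionalExtensionality ClassicalEpsilon.
Set Implicit Arguments. Unset Strict Implicit. Unset Printing Implicit Defensive.
Local Open Scope group_scope.

Section Game.
Variables (gT hT : finGroupType) (m : nat).
Implicit Types c : config gT hT m.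

Lemma set_pebble_None_set c i x :
  set_pebble (set_pebble c i None) i x = set_pebble c i x.
Proof. apply: functional_extensionality => j; rewrite /set_pebble; by case: (j == i). Qed.

Lemma SW_mono r c : spoiler_wins r c -> spoiler_wins r.+1 c.
Proof.
elim: r c => [|r IH] c //= [i H]; exists i.
case: H => [H|[[g H]|[h H]]]; [by left | right; left; exists g | right; right; exists h] => ?; exact: IH.
Qed.

Lemma SW_le r r' c : r <= r' -> spoiler_wins r c -> spoiler_wins r' c.
Proof.
move=> le; rewrite -(subnK le); elim: (r' - r) => [//|k IH] H.
rewrite addSn; exact: SW_mono (IH H).
Qed.

Definition extends c c' := forall i p, c i = Some p -> c' i = Some p.

Lemma ME_ext c c' : extends c c' -> marked_equiv c' -> marked_equiv c.
Proof. move=> E M i j t gi gj gt hi hj ht Hi Hj Ht; exact: M (E _ _ Hi) (E _ _ Hj) (E _ _ Ht). Qed.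

Lemma extends_set c c' i x : extends c c' -> extends (set_pebble c i x) (set_pebble c' i x).
Proof. move=> E j p; rewrite /set_pebble; case: (j == i) => //; exact: E. Qed.

Lemma SW_ext r c c' : extends c c' -> spoiler_wins r c -> spoiler_wins r c'.
Proof.
elim: r c c' => [|r IH] c c' E //= [i H]; exists i.
case: H => [H|[[g H]|[h H]]].
- left => M; apply: H; apply: ME_ext M; exact: extends_set.
- right; left; exists g => h; apply: IH (H h); apply: extends_set; exact: extends_set.
- right; right; exists h => g; apply: IH (H g); apply: extends_set; exact: extends_set.
Qed.

Lemma SW_left r c i g :
  (forall h, spoiler_wins r (set_pebble c i (Some (g, h)))) -> spoiler_wins r.+1 c.
Proof. move=> H; exists i; right; left; exists g => h; rewrite set_pebble_None_set; exact: H. Qed.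

Lemma SW_right r c i h :
  (forall g, spoiler_wins r (set_pebble c i (Some (g, h)))) -> spoiler_wins r.+1 c.
Proof. move=> H; exists i; right; right; exists h => g; rewrite set_pebble_None_set; exact: H. Qed.

Lemma SW_fail r c (i a b t : 'I_m) ga gb gt ha hb ht :
  c a = Some (ga, ha) -> c b = Some (gb, hb) -> c t = Some (gt, ht) ->
  i != a -> i != b -> i != t ->
  ~ ((ga = gb <-> ha = hb) /\ (ga * gb = gt <-> ha * hb = ht)) ->
  spoiler_wins r.+1 c.
Proof.
move=> Ha Hb Ht ia ib it N; exists i; left => M; apply: N.
apply: (M a b t); rewrite /set_pebble.
- by rewrite eq_sym (negbTE ia).
- by rewrite eq_sym (negbTE ib).
- by rewrite eq_sym (negbTE it).
Qed.

End Game.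
Arguments SW_fail {gT hT m r c i a b t ga gb gt ha hb ht}.

Section Swap.
Variables (gT hT : finGroupType) (m : nat).

Definition swapc (c : config gT hT m) : config hT gT m :=
  fun i => omap (fun p => (p.2, p.1)) (c i).

Lemma swapc_set c i x : swapc (set_pebble c i x) = set_pebble (swapc c) i (omap (fun p => (p.2, p.1)) x).
Proof. apply: functional_extensionality => j; rewrite /swapc /set_pebble; by case: (j == i). Qed.

Lemma ME_swap c : marked_equiv (swapc c) -> marked_equiv c.
Proof.
move=> M i j t gi gj gt hi hj ht Hi Hj Ht.
have := M i j t hi hj ht gi gj gt; rewrite /swapc Hi Hj Ht /=.
move=> /(_ erefl erefl erefl) [E1 E2]; split; split => H; by [apply/E1 | apply/E2].
Qed.

Lemma SW_swap r c : spoiler_wins r c -> spoiler_wins r (swapc c).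
Proof.
elim: r c => [|r IH] c //= [i H]; exists i.
case: H => [H|[[g H]|[h H]]].
- left => M; apply: H; apply: ME_swap; by rewrite swapc_set.
- right; right; exists g => h.
  have := IH _ (H h); by rewrite !swapc_set.
- right; left; exists h => g.
  have := IH _ (H g); by rewrite !swapc_set.
Qed.
End Swap.

Section Trans.
Variables (gT hT kT : finGroupType) (m : nat).

Definition comp3 (c1 : config gT hT m) (c2 : config hT kT m) (c3 : config gT kT m) :=
  forall i, (c1 i = None /\ c2 i = None /\ c3 i = None) \/
    exists g h k, [/\ c1 i = Some (g, h), c2 i = Some (h, k) & c3 i = Some (g, k)].

Lemma comp3_set c1 c2 c3 i : comp3 c1 c2 c3 ->
  comp3 (set_pebble c1 i None) (set_pebble c2 i None) (set_pebble c3 i None).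
Proof. move=> C j; rewrite /set_pebble; case: (j == i); [by left | exact: C]. Qed.

Lemma comp3_setS c1 c2 c3 i g h k : comp3 c1 c2 c3 ->
  comp3 (set_pebble c1 i (Some (g, h))) (set_pebble c2 i (Some (h, k)))
        (set_pebble c3 i (Some (g, k))).
Proof. move=> C j; rewrite /set_pebble; case: (j == i); [right; by exists g, h, k | exact: C]. Qed.

Lemma ME_comp c1 c2 c3 : comp3 c1 c2 c3 -> marked_equiv c1 -> marked_equiv c2 -> marked_equiv c3.
Proof.
move=> C M1 M2 i j t gi gj gt ki kj kt Hi Hj Ht.
case: (C i) => [[_ [_ E]]|[g1 [h1 [k1 [A1 B1 C1]]]]]; first by rewrite E in Hi.
case: (C j) => [[_ [_ E]]|[g2 [h2 [k2 [A2 B2 C2]]]]]; first by rewrite E in Hj.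
case: (C t) => [[_ [_ E]]|[g3 [h3 [k3 [A3 B3 C3]]]]]; first by rewrite E in Ht.
rewrite Hi in C1; rewrite Hj in C2; rewrite Ht in C3.
case: C1 => ? ?; case: C2 => ? ?; case: C3 => ? ?; subst.
have [E1 F1] := M1 _ _ _ _ _ _ _ _ _ A1 A2 A3.
have [E2 F2] := M2 _ _ _ _ _ _ _ _ _ B1 B2 B3.
split; split => H; by [apply/E2/E1 | apply/E1/E2 | apply/F2/F1 | apply/F1/F2].
Qed.

Lemma SW_trans r c1 c2 c3 : comp3 c1 c2 c3 ->
  ~ spoiler_wins r c1 -> ~ spoiler_wins r c2 -> ~ spoiler_wins r c3.
Proof.
elim: r c1 c2 c3 => [|r IH] c1 c2 c3 C N1 N2 //= [i H].
have C' := comp3_set i C.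
case: H => [H|[[g H]|[k H]]].
- apply: H; apply: (ME_comp C').
  + apply: NNPP => NM; apply: N1; exists i; by left.
  + apply: NNPP => NM; apply: N2; exists i; by left.
- have [h Hh] : exists h, ~ spoiler_wins r (set_pebble (set_pebble c1 i None) i (Some (g, h))).
    apply: NNPP => NE; apply: N1; exists i; right; left; exists g => h.
    apply: NNPP => NS; apply: NE; by exists h.
  have [k Hk] : exists k, ~ spoiler_wins r (set_pebble (set_pebble c2 i None) i (Some (h, k))).
    apply: NNPP => NE; apply: N2; exists i; right; left; exists h => k.
    apply: NNPP => NS; apply: NE; by exists k.
  exact: IH (comp3_setS i g h k C') Hh Hk (H k).
- have [h Hh] : exists h, ~ spoiler_wins r (set_pebble (set_pebble c2 i None) i (Some (h, k))).
    apply: NNPP => NE; apply: N2; exists i; right; right; exists k => h.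
    apply: NNPP => NS; apply: NE; by exists h.
  have [g Hg] : exists g, ~ spoiler_wins r (set_pebble (set_pebble c1 i None) i (Some (g, h))).
    apply: NNPP => NE; apply: N1; exists i; right; right; exists h => g.
    apply: NNPP => NS; apply: NE; by exists g.
  exact: IH (comp3_setS i g h k C') Hg Hh (H g).
Qed.
End Trans.

Section Perm.
Variables (gT hT : finGroupType) (m : nat).
Implicit Types c : config gT hT m.

Definition permc c (s : {perm 'I_m}) : config gT hT m := fun i => c (s i).

Lemma permc_set c s i x : permc (set_pebble c i x) s = set_pebble (permc c s) (s^-1 i) x.
Proof.
apply: functional_extensionality => j; rewrite /permc /set_pebble.
have -> : (s j == i) = (j == s^-1 i).
  apply/eqP/eqP => [<-|->]; [by rewrite permK | by rewrite permKV].
done.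
Qed.

Lemma ME_perm c s : marked_equiv (permc c s) -> marked_equiv c.
Proof.
move=> M i j t gi gj gt hi hj ht Hi Hj Ht.
apply: (M (s^-1 i) (s^-1 j) (s^-1 t)); by rewrite /permc permKV.
Qed.

Lemma SW_perm r c s : spoiler_wins r c -> spoiler_wins r (permc c s).
Proof.
elim: r c => [|r IH] c //= [i H]; exists (s^-1 i).
case: H => [H|[[g H]|[h H]]].
- left => M; apply: H; apply: (ME_perm (s := s)); by rewrite permc_set.
- right; left; exists g => h; have := IH _ (H h); by rewrite !permc_set.
- right; right; exists h => g; have := IH _ (H g); by rewrite !permc_set.
Qed.
End Perm.


Lemma set_pebble_eq (gT hT : finGroupType) m (c : config gT hT m) i x : set_pebble c i x i = x.
Proof. by rewrite /set_pebble eqxx. Qed.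
Lemma set_pebble_ne (gT hT : finGroupType) m (c : config gT hT m) i j x : j != i -> set_pebble c i x j = c j.
Proof. by rewrite /set_pebble => /negbTE ->. Qed.

Section Def.
Variables (gT : finGroupType) (d : nat) (x : nat -> gT).
Hypothesis d_pos : 0 < d.
Notation cfg := (config gT gT d.+3).

Lemma pick2 (a b : 'I_d.+3) : exists i : 'I_d.+3, [&& d <= i, i != a & i != b].
Proof.
have vk k : k <= 2 -> nat_of_ord (@inord d.+2 (d + k)) = d + k by move=> le; rewrite inordK //; lia.
have ne (i j : 'I_d.+3) : nat_of_ord i != nat_of_ord j -> i != j by [].
case: (boolP ((d != a) && (d != b))) => [/andP[h1 h2]|h1].
  exists (inord (d + 0)); rewrite !vk //; apply/and3P; split; [lia| apply: ne; rewrite vk //; lia..].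
case: (boolP ((d.+1 != a) && (d.+1 != b))) => [/andP[h3 h4]|h3].
  exists (inord (d + 1)); apply/and3P; split; [rewrite vk //; lia| apply: ne; rewrite vk //; lia..].
exists (inord (d + 2)); apply/and3P; split; [rewrite vk //; lia| apply: ne; rewrite vk //; lia..].
Qed.

Lemma pick3 (a b c : 'I_d.+3) : exists i : 'I_d.+3, [&& i != a, i != b & i != c].
Proof.
have vk k : (k <= 3)%N -> nat_of_ord (@inord d.+2 k) = k by move=> le; rewrite inordK //; lia.
have ne (i j : 'I_d.+3) : nat_of_ord i != nat_of_ord j -> i != j by [].
have F : exists k, k <= 3 /\ [&& k != nat_of_ord a, k != nat_of_ord b & k != nat_of_ord c].
  case: (boolP ([&& 0 != nat_of_ord a, 0 != nat_of_ord b & 0 != nat_of_ord c])) => H0; first by exists 0.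
  case: (boolP ([&& 1%N != nat_of_ord a, 1%N != nat_of_ord b & 1%N != nat_of_ord c])) => H1; first by exists 1%N.
  case: (boolP ([&& 2 != nat_of_ord a, 2 != nat_of_ord b & 2 != nat_of_ord c])) => H2; first by exists 2.
  exists 3%N; split => //; move: H0 H1 H2; lia.
case: F => k [lek /and3P[h1 h2 h3]]; exists (inord k).
apply/and3P; split; apply: ne; rewrite vk //.
Qed.

Definition good (c : cfg) := forall i : 'I_d.+3, i < d -> c i = Some (x i, x i).

Lemma good_set c (i : 'I_d.+3) (y : option (gT * gT)) : good c -> d <= i -> good (set_pebble c i y).
Proof. move=> G di j jd; rewrite set_pebble_ne; [exact: G | apply/negP => /eqP E; subst; lia]. Qed.

Definition Def T g := forall (c : cfg) (q : 'I_d.+3) g',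
  good c -> d <= q -> g' != g -> c q = Some (g, g') -> spoiler_wins T c.
Definition RDef T a g := forall (c : cfg) (p q : 'I_d.+3) g',
  p != q -> g' != g -> c p = Some (a, a) -> c q = Some (g, g') -> spoiler_wins T c.

Lemma Def_mono T T' g : Def T g -> T <= T' -> Def T' g.
Proof. move=> D le c q g' G dq ng Hq; apply: SW_le le _; exact: D G dq ng Hq. Qed.
Lemma RDef_mono T T' a g : RDef T a g -> T <= T' -> RDef T' a g.
Proof. move=> D le c p q g' pq ng Hp Hq; apply: SW_le le _; exact: D pq ng Hp Hq. Qed.

Lemma Def_x (i : 'I_d.+3) : i < d -> Def 1 (x i).
Proof.
move=> id c q g' G dq ng Hq.
have [j /and3P[dj jq ji]] := pick2 q i.
apply: (SW_fail (i:=j) (a:=i) (b:=q) (t:=q) (G i id) Hq Hq) => //.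
by move=> [[E _] _]; move: ng; rewrite (E erefl) eqxx.
Qed.

Lemma Def_1 : Def 1 1.
Proof.
move=> c q g' G dq ng Hq.
have [j /and3P[dj jq _]] := pick2 q q.
apply: (SW_fail (i:=j) (a:=q) (b:=q) (t:=q) Hq Hq Hq) => //.
move=> [_ [E _]]; have := E (mulg1 1) => /(canRL (mulKg g')); rewrite mulVg => E1.
by rewrite E1 eqxx in ng.
Qed.

Lemma Def_two T u v t : Def T u -> Def T v ->
  (forall (c : cfg) (i1 i2 q : 'I_d.+3) g', g' != t -> d <= i1 -> d <= i2 -> d <= q ->
     i1 != i2 -> i1 != q -> i2 != q ->
     c i1 = Some (u, u) -> c i2 = Some (v, v) -> c q = Some (t, g') -> spoiler_wins 1 c) ->
  Def T.+3 t.
Proof.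
move=> Du Dv F c q g' G dq ng Hq.
have [i1 /and3P[d1 n1q _]] := pick2 q q.
apply: (SW_left (i:=i1) (g:=u)) => u'.
case: (eqVneq u' u) => [->|nu]; last first.
  apply: (SW_le (r:=T)); first lia.
  apply: (Du _ i1 u') => //; [exact: good_set | exact: set_pebble_eq].
have [i2 /and3P[d2 n2q n21]] := pick2 q i1.
apply: (SW_left (i:=i2) (g:=v)) => v'.
case: (eqVneq v' v) => [->|nv]; last first.
  apply: (SW_le (r:=T)); first lia.
  apply: (Dv _ i2 v') => //; [apply: good_set => //; exact: good_set | exact: set_pebble_eq].
apply: (SW_le (r:=1)) => //.
apply: (F _ i1 i2 q g') => //; first by rewrite eq_sym.
- by rewrite set_pebble_ne 1?eq_sym // set_pebble_eq.
- exact: set_pebble_eq.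
- by rewrite !set_pebble_ne // eq_sym.
Qed.

Lemma ord0_ne (i : 'I_d.+3) : d <= i -> (@inord d.+2 0) != i.
Proof. move=> di; apply/negP => /eqP E; move: di; rewrite -E inordK //; lia. Qed.

Lemma Def_mul T u v : Def T u -> Def T v -> Def T.+3 (u * v).
Proof.
move=> Du Dv; apply: Def_two Du Dv _ => c i1 i2 q g' ng d1 d2 dq _ _ _ H1 H2 Hq.
apply: (SW_fail (i:=inord 0) H1 H2 Hq); try exact: ord0_ne.
by move=> [_ [E _]]; move: ng; rewrite (E erefl) eqxx.
Qed.

Lemma Def_div T y w : Def T y -> Def T w -> Def T.+3 (y * w^-1).
Proof.
move=> Dy Dw; apply: Def_two Dy Dw _ => c i1 i2 q g' ng d1 d2 dq _ _ _ H1 H2 Hq.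
apply: (SW_fail (i:=inord 0) Hq H2 H1); try exact: ord0_ne.
move=> [_ [E _]]; move: ng; have := E (mulgKV w y) => <-.
by rewrite mulgK eqxx.
Qed.

Lemma RDef_two T a u v t : RDef T a u -> RDef T a v ->
  (forall (c : cfg) (p i1 i2 q : 'I_d.+3) g', g' != t ->
     p != i1 -> p != i2 -> p != q -> i1 != i2 -> i1 != q -> i2 != q ->
     c i1 = Some (u, u) -> c i2 = Some (v, v) -> c q = Some (t, g') -> spoiler_wins 1 c) ->
  RDef T.+3 a t.
Proof.
move=> Du Dv F c p q g' pq ng Hp Hq.
have [i1 /and3P[n1p n1q _]] := pick3 p q q.
apply: (SW_left (i:=i1) (g:=u)) => u'.
case: (eqVneq u' u) => [->|nu]; last first.
  apply: (SW_le (r:=T)); first lia.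
  apply: (Du _ p i1 u') => //; [by rewrite eq_sym | by rewrite set_pebble_ne // eq_sym | exact: set_pebble_eq].
have [i2 /and3P[n2p n2q n21]] := pick3 p q i1.
apply: (SW_left (i:=i2) (g:=v)) => v'.
case: (eqVneq v' v) => [->|nv]; last first.
  apply: (SW_le (r:=T)); first lia.
  apply: (Dv _ p i2 v') => //; [by rewrite eq_sym | by rewrite !set_pebble_ne // eq_sym | exact: set_pebble_eq].
apply: (SW_le (r:=1)) => //.
apply: (F _ p i1 i2 q g') => //; rewrite 1?eq_sym //.
- by rewrite set_pebble_ne 1?eq_sym // set_pebble_eq.
- exact: set_pebble_eq.
- by rewrite !set_pebble_ne // eq_sym.
Qed.

Lemma RDef_id a : RDef 1 a a.
Proof.
move=> c p q g' pq ng Hp Hq.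
have [j /and3P[jp jq _]] := pick3 p q q.
apply: (SW_fail (i:=j) Hp Hq Hq) => //.
by move=> [[E _] _]; move: ng; rewrite -(E erefl) eqxx.
Qed.

Lemma RDef_one a : RDef 1 a 1.
Proof.
move=> c p q g' pq ng Hp Hq.
have [j /and3P[jp jq _]] := pick3 p q q.
apply: (SW_fail (i:=j) Hq Hq Hq) => //.
move=> [_ [E _]]; have := E (mulg1 1) => /(canRL (mulKg g')); rewrite mulVg => E1.
by rewrite E1 eqxx in ng.
Qed.

Lemma RDef_mul T a u v : RDef T a u -> RDef T a v -> RDef T.+3 a (u * v).
Proof.
move=> Du Dv; apply: RDef_two Du Dv _ => c p i1 i2 q g' ng p1 p2 pq _ _ _ H1 H2 Hq.
apply: (SW_fail (i:=p) H1 H2 Hq) => //.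
by move=> [_ [E _]]; move: ng; rewrite (E erefl) eqxx.
Qed.

Lemma RDef_trans T S a b g : RDef T a b -> RDef S b g -> RDef (maxn T S).+1 a g.
Proof.
move=> Db Dg c p q g' pq ng Hp Hq.
have [i /and3P[ip iq _]] := pick3 p q q.
apply: (SW_left (i:=i) (g:=b)) => b'.
case: (eqVneq b' b) => [->|nb].
  apply: (SW_le (r:=S)); first lia.
  apply: (Dg _ i q g') => //; [exact: set_pebble_eq | by rewrite set_pebble_ne // eq_sym].
apply: (SW_le (r:=T)); first lia.
apply: (Db _ p i b') => //; [by rewrite eq_sym | by rewrite set_pebble_ne // eq_sym | exact: set_pebble_eq].
Qed.

Lemma Def_trans T S a g : Def T a -> RDef S a g -> Def (maxn T S).+1 g.
Proof.
move=> Da Dg c q g' G dq ng Hq.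
have [i /and3P[di iq _]] := pick2 q q.
apply: (SW_left (i:=i) (g:=a)) => a'.
case: (eqVneq a' a) => [->|na].
  apply: (SW_le (r:=S)); first lia.
  apply: (Dg _ i q g') => //; [exact: set_pebble_eq | by rewrite set_pebble_ne // eq_sym].
apply: (SW_le (r:=T)); first lia.
apply: (Da _ i a') => //; [exact: good_set | exact: set_pebble_eq].
Qed.

Definition B j := (2 ^ (2 ^ j))%N.

Lemma RDef_pow j : forall e, e <= B j -> forall a, RDef (4 * j + 4)%N a (a ^+ e).
Proof.
elim: j => [|j IH] e le a.
  rewrite /B /= in le.
  case: e le => [|[|[|e]]] le //.
  - rewrite expg0; apply: RDef_mono (RDef_one (a:=a)) _; lia.
  - rewrite expg1; apply: RDef_mono (RDef_id (a:=a)) _; lia.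
  - rewrite expgS expg1; exact: RDef_mul (RDef_id (a:=a)) (RDef_id (a:=a)).
have BS : B j.+1 = (B j * B j)%N by rewrite /B expnS mul2n -addnn expnD.
have Bp : 0 < B j by rewrite /B expn_gt0.
case: (eqVneq e (B j.+1)) => [->|ne].
  rewrite BS expgM; apply: RDef_mono (RDef_trans (IH _ (leqnn _) a) (IH _ (leqnn _) _)) _.
  rewrite maxnn; lia.
have lt : (e < B j * B j)%N by rewrite -BS ltn_neqAle ne le.
rewrite (divn_eq e (B j)) expgD expgM.
have q_lt : e %/ B j < B j by rewrite ltn_divLR.
have r_lt : e %% B j < B j by rewrite ltn_mod.
apply: RDef_mono (RDef_mul (T := (4 * j + 5)%N) _ _) _; last lia.
  apply: RDef_mono (RDef_trans (IH _ (ltnW q_lt) a) (IH _ (leqnn _) _)) _; rewrite maxnn; lia.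
apply: RDef_mono (IH _ (ltnW r_lt) a) _; lia.
Qed.

Lemma Def_pow T a j e : Def T a -> e <= B j -> Def (T + 4 * j + 5)%N (a ^+ e).
Proof.
move=> Da le; apply: Def_mono (Def_trans Da (RDef_pow le (a:=a))) _.
have := leq_maxl T (4 * j + 4)%N; have := leq_maxr T (4 * j + 4)%N; lia.
Qed.

Lemma Def_prod T t : 0 < T -> forall s : seq gT, (size s <= 2 ^ t)%N ->
  (forall z, z \in s -> Def T z) -> Def (T + 3 * t)%N (\prod_(z <- s) z).
Proof.
move=> T0; elim: t => [|t IH] s le D.
  case: s le D => [|z [|]] //= _ D.
    rewrite big_nil; apply: Def_mono Def_1 _; lia.
  rewrite big_seq1 addn0; apply: D; exact: mem_head.
rewrite -(cat_take_drop (2 ^ t) s) big_cat /=.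
have -> : (T + 3 * t.+1 = (T + 3 * t).+3)%N by lia.
apply: Def_mul; apply: IH.
- rewrite size_take; case: ifP => //; lia.
- move=> z /mem_take; exact: D.
- rewrite size_drop; rewrite expnS in le; lia.
- move=> z /mem_drop; exact: D.
Qed.

End Def.


Definition pb (P : Prop) : bool := if excluded_middle_informative P then true else false.
Lemma pbP (P : Prop) : reflect P (pb P).
Proof. rewrite /pb; case: excluded_middle_informative => H; by constructor. Qed.

Lemma proper_double (gT : finGroupType) (H G : {group gT}) :
  H \proper G -> (2 * #|H| <= #|G|)%N.
Proof.
move=> pHG; have lt := proper_card pHG.
have /dvdnP [q Hq] := cardSg (proper_sub pHG).
have H0 : (0 < #|H|)%N by rewrite cardG_gt0.
rewrite Hq in lt *; case: q lt {Hq} => [|[|q]] lt; rewrite ?mul0n ?mul1n in lt *; [lia|lia|].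
rewrite leq_mul2r; lia.
Qed.

Section Schreier.
Variable gT : finGroupType.

Lemma schreier (K N : {group gT}) (S R M0 : {set gT}) :
  N <| K -> <<S>> = K -> R \subset K ->
  (forall k, k \in K -> exists2 r, r \in R & r^-1 * k \in N) ->
  (forall r r' s, r \in R -> r' \in R -> s \in S -> r * s * r'^-1 \in N -> r * s * r'^-1 \in M0) ->
  (forall r, r \in R -> r \in N -> r \in M0) ->
  M0 \subset N -> <<M0>> = N.
Proof.
move=> nNK gS sRK cov F1 F2 sM0N.
have sSK : S \subset K by rewrite -gS; exact: subset_gen.
have nN : K \subset 'N(N) := normal_norm nNK.
have sNK : N \subset K := normal_sub nNK.
have cl : forall n (c : 'I_n -> gT), (forall i, c i \in S) ->
    exists2 r, r \in R & (\prod_i c i) * r^-1 \in <<M0>>.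
  elim=> [|n IH] c cS.
    have [r rR rN] := cov 1 (group1 K).
    rewrite mulg1 in rN.
    exists r => //; rewrite big_ord0 mul1g.
    by rewrite groupV mem_gen // F2 // -groupV.
  rewrite big_ord_recr /=.
  have [r rR Hr] := IH (fun i => c (widen_ord (leqnSn n) i)) (fun i => cS _).
  set s := c ord_max.
  have sK : s \in K := subsetP sSK _ (cS _).
  have rK : r \in K := subsetP sRK _ rR.
  have [r' r'R Hr'] := cov (r * s) (groupM rK sK).
  have r'K : r' \in K := subsetP sRK _ r'R.
  have rsN : r * s * r'^-1 \in N.
    have -> : r * s * r'^-1 = (r'^-1 * (r * s)) ^ (r'^-1).
      by rewrite /conjg invgK !mulgA mulgV mul1g.
    by rewrite memJ_norm // (subsetP nN) // groupV.
  exists r' => //.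
  have -> : (\prod_(i < n) c (widen_ord (leqnSn n) i)) * s * r'^-1 =
            ((\prod_(i < n) c (widen_ord (leqnSn n) i)) * r^-1) * (r * s * r'^-1).
    by rewrite !mulgA mulgKV.
  by rewrite groupM // mem_gen // F1 // cS.
apply/eqP; rewrite eqEsubset gen_subG sM0N /=.
apply/subsetP => n nNn.
have nK : n \in K := subsetP sNK _ nNn.
move: (nK); rewrite -gS => /gen_prodgP [l [c cS En]].
have [r rR Hr] := cl l c cS.
rewrite -En in Hr.
have sMN : <<M0>> \subset N by rewrite gen_subG.
have rN : r \in N by rewrite -groupV -(groupMl _ nNn) (subsetP sMN).
have -> : n = (n * r^-1) * r by rewrite mulgKV.
by rewrite groupM // mem_gen // F2.
Qed.
End Schreier.

Section Main.
Variables (gT : finGroupType) (d : nat) (x : nat -> gT).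
Hypothesis d_pos : (0 < d)%N.

Definition LL := trunc_log 2 #|gT|.
Definition JJ := (trunc_log 2 LL).+1.

Lemma L_J : (LL.+1 <= 2 ^ JJ)%N.
Proof. exact: trunc_log_ltn. Qed.

Lemma n_B : (#|gT| <= B JJ)%N.
Proof.
have h1 : (#|gT| < 2 ^ LL.+1)%N by exact: trunc_log_ltn.
have h2 : (2 ^ LL.+1 <= B JJ)%N by rewrite /B leq_pexp2l //; exact: L_J.
lia.
Qed.

Lemma Def_powA T a e : Def d x T a -> Def d x (T + 4 * JJ + 5)%N (a ^+ e).
Proof.
move=> Da; rewrite -expg_mod_order; refine (Def_pow d_pos (j := JJ) Da _).
have h1 := ltn_pmod e (order_gt0 a).
have h2 : (#[a] <= #|gT|)%N by exact: max_card.
have h3 := n_B; lia.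
Qed.

Definition PP := (4 * JJ + 5 + 3 * JJ)%N.

Lemma layer (K N : {group gT}) (S : {set gT}) T : (0 < T)%N -> N <| K ->
  K^`(1) \subset N -> <<S>> = K -> (forall s, s \in S -> Def d x T s) ->
  forall k, k \in K -> exists r, [/\ r \in K, Def d x (T + PP)%N r & r^-1 * k \in N].
Proof.
move=> T0 nNK dK gS DS.
have sSK : S \subset K by rewrite -gS; exact: subset_gen.
have sNK : N \subset K := normal_sub nNK.
have nN : K \subset 'N(N) := normal_norm nNK.
pose T1 := (T + 4 * JJ + 5)%N.
have inv : forall j, exists A : {group gT}, [/\ N \subset A, A \subset K,
    (forall a, a \in A -> exists fs : seq gT, [/\ (size fs <= j)%N,
        (forall f, f \in fs -> f \in K /\ Def d x T1 f) &
        (\prod_(f <- fs) f)^-1 * a \in N]) &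
    (A :=: K \/ (2 ^ j <= #|A|)%N)].
  elim=> [|j [A [sNA sAK RA cA]]].
    exists N; split => //.
    - by move=> a aN; exists [::]; split => //; rewrite big_nil invg1 mul1g.
    - by right; rewrite expn0 cardG_gt0.
  case: (eqVneq (A : {set gT}) K) => [EAK|nAK].
    exists A; split => //; last by left.
    move=> a aA; have [fs [h1 h2 h3]] := RA a aA; exists fs; split => //; lia.
  have [s sS sA] : exists2 s, s \in S & s \notin A.
    case: (boolP (S \subset A)) => [sSA|/subsetPn [s sS sA]]; last by exists s.
    have : K \subset A by rewrite -gS gen_subG.
    move=> sKA; case/negP: nAK; by rewrite eqEsubset sAK sKA.
  have sK : s \in K := subsetP sSK _ sS.
  have nAK' : A <| K := sub_der1_normal (subset_trans dK sNA) sAK.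
  have nsA : <[s]> \subset 'N(A) by rewrite cycle_subG (subsetP (normal_norm nAK')).
  exists (A <*> <[s]>)%G; split.
  - exact: subset_trans sNA (joing_subl _ _).
  - by apply/joing_subP; split => //; rewrite cycle_subG.
  - move=> a'; rewrite /= (norm_joinEr nsA) => /mulsgP [a y aA /cycleP [e ->] ->].
    have [fs [h1 h2 h3]] := RA a aA; exists (rcons fs (s ^+ e)); split.
    + by rewrite size_rcons ltnS.
    + move=> f; rewrite mem_rcons inE => /orP [/eqP -> | /h2 //].
      split; [exact: groupX | exact: Def_powA (DS _ sS)].
    + rewrite big_rcons /=.
      have -> : (\prod_(f <- fs) f * s ^+ e)^-1 * (a * s ^+ e) =
                ((\prod_(f <- fs) f)^-1 * a) ^ (s ^+ e).
        by rewrite invMg /conjg !mulgA.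
      by rewrite memJ_norm // (subsetP nN) // groupX.
  - right; case: cA => [EA|le]; first by move: nAK; rewrite EA eqxx.
    have pA : A \proper (A <*> <[s]>)%G.
      rewrite properEneq joing_subl andbT; apply/eqP => E; move: sA.
      by rewrite E /= mem_gen // inE cycle_id orbT.
    have := proper_double pA; rewrite expnS => h; apply: leq_trans h; by rewrite leq_mul2l.
have [A [sNA sAK RA cA]] := inv LL.+1.
have EA : A :=: K.
  case: cA => // le; have h1 : (#|gT| < 2 ^ LL.+1)%N by exact: trunc_log_ltn.
  have h2 := max_card (mem A); have h3 := leq_ltn_trans h2 h1.
  by rewrite ltnNge le in h3.
move=> k kK; rewrite -EA in kK.
have [fs [h1 h2 h3]] := RA k kK.
exists (\prod_(f <- fs) f); split => //.
- by rewrite big_seq; apply: group_prod => f /h2 [].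
- have -> : (T + PP = T1 + 3 * JJ)%N by rewrite /T1 /PP; lia.
  refine (Def_prod d_pos (T := T1) (t := JJ) _ _ _).
  + rewrite /T1; lia.
  + exact: leq_trans h1 L_J.
  + by move=> z /h2 [].
Qed.

End Main.


Section Main2.
Variables (gT : finGroupType) (d : nat) (x : nat -> gT).
Hypothesis d_pos : (0 < d)%N.
Hypothesis Hgen : <<[set x (nat_of_ord i) | i : 'I_d]>> = [set: gT].

Definition Kd i : {group gT} := ([set: gT]^`(i))%G.
Definition step := (7 * JJ gT + 11)%N.
Definition Tc i := (1 + i * step)%N.

Lemma TcS i : Tc i.+1 = (Tc i + PP gT + 6)%N.
Proof. rewrite /Tc /step /PP mulSn; lia. Qed.

Lemma Tc_mono i j : (i <= j)%N -> (Tc i <= Tc j)%N.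
Proof. by move=> le; rewrite /Tc leq_add2l leq_mul2r le orbT. Qed.

Lemma KdS i : Kd i.+1 :=: (Kd i)^`(1).
Proof. by rewrite /= dergSn derg1. Qed.

Lemma dKd i : (Kd i)^`(1) \subset Kd i.+1.
Proof. by rewrite KdS. Qed.

Lemma Kd_normal i : Kd i.+1 <| Kd i.
Proof. rewrite KdS; exact: der_normal. Qed.

Lemma gens i : exists S : {set gT}, <<S>> = Kd i /\ (forall s, s \in S -> Def d x (Tc i) s).
Proof.
elim: i => [|i [S [gS DS]]].
  exists [set x (nat_of_ord i) | i : 'I_d]; split.
    by rewrite Hgen /= derg0.
  move=> s /imsetP [i _ ->].
  have id : (@inord d.+2 i < d)%N by rewrite inordK //; have := ltn_ord i; lia.
  have := Def_x d_pos id; rewrite inordK; last by have := ltn_ord i; lia.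
  by rewrite /Tc mul0n addn0.
have T0 : (0 < Tc i)%N by rewrite /Tc.
have cov := layer d_pos T0 (Kd_normal i) (dKd i) gS DS.
pose R := [set r in Kd i | pb (Def d x (Tc i + PP gT) r)].
pose M0 := [set y in Kd i.+1 | pb (Def d x (Tc i.+1) y)].
exists M0; split; last by move=> s; rewrite inE => /andP [_ /pbP].
apply: (schreier (Kd_normal i) gS (R := R)).
- by apply/subsetP => r; rewrite inE => /andP [].
- move=> k kK; have [r [rK Dr rk]] := cov k kK; exists r => //.
  by rewrite inE rK; apply/pbP.
- move=> r r' s; rewrite !inE => /andP [_ /pbP Dr] /andP [_ /pbP Dr'] sS rsN.
  rewrite rsN; apply/pbP.
  have -> : Tc i.+1 = (Tc i + PP gT + 3).+3 by rewrite TcS; lia.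
  refine (Def_div d_pos _ _).
  + have Ds : Def d x (Tc i + PP gT) s by apply: Def_mono (DS _ sS) _; lia.
    apply: Def_mono (Def_mul d_pos Dr Ds) _; lia.
  + apply: Def_mono Dr' _; lia.
- move=> r; rewrite !inE => /andP [_ /pbP Dr] rN; rewrite rN; apply/pbP.
  apply: Def_mono Dr _; rewrite TcS; lia.
- by apply/subsetP => y; rewrite inE => /andP [].
Qed.

Lemma all_def (r : nat) : [set: gT]^`(r) = 1 ->
  forall g, Def d x (1 + r * (7 * JJ gT + 14))%N g.
Proof.
move=> Hr.
have key : forall j, (j <= r)%N -> forall k, k \in Kd (r - j) -> Def d x (Tc r + 3 * j)%N k.
  elim=> [|j IH] le k kK.
    move: kK; rewrite subn0 /= Hr => /set1gP ->.
    apply: Def_mono (Def_1 d_pos) _; rewrite /Tc; lia.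
  set i := (r - j.+1)%N.
  have ii : i.+1 = (r - j)%N by rewrite /i; lia.
  have [S [gS DS]] := gens i.
  have T0 : (0 < Tc i)%N by rewrite /Tc.
  have [r0 [r0K Dr0 r0k]] := layer d_pos T0 (Kd_normal i) (dKd i) gS DS kK.
  have Dk := IH (ltnW le) _ (eq_ind _ (fun z => r0^-1 * k \in Kd z) r0k _ ii).
  rewrite -(mulKVg r0 k).
  have -> : (Tc r + 3 * j.+1 = (Tc r + 3 * j).+3)%N by lia.
  refine (Def_mul d_pos _ Dk).
  apply: Def_mono Dr0 _.
  have hi : (i.+1 <= r)%N by rewrite /i; lia.
  have := Tc_mono hi; rewrite TcS; lia.
move=> g.
have := key r (leqnn r) g; rewrite subnn /= derg0 inE => /(_ isT).
have -> : (Tc r + 3 * r = 1 + r * (7 * JJ gT + 14))%N.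
  rewrite /Tc /step -addnA; congr (_ + _)%N.
  have -> : (7 * JJ gT + 14 = 7 * JJ gT + 11 + 3)%N by lia.
  rewrite !mulnDr; lia.
done.
Qed.
End Main2.


Lemma swapc_invol (gT hT : finGroupType) m (c : config gT hT m) : swapc (swapc c) = c.
Proof. apply: functional_extensionality => i; rewrite /swapc; by case: (c i) => [[]|]. Qed.

Section Final.
Local Unset Implicit Arguments.
Variables (gT hT : finGroupType) (d : nat) (x : nat -> gT) (D : nat).
Hypothesis d_pos : (0 < d)%N.
Hypothesis Hdef : forall g, Def d x D g.
Hypothesis card : #|gT| = #|hT|.
Hypothesis niso : ~ ([set: gT] \isog [set: hT]).
Variable y : nat -> hT.
Variable c0 : config gT hT d.+3.
Hypothesis H0 : forall i : 'I_d.+3, c0 i = if (i < d)%N then Some (x i, y i) else None.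

Let pd : 'I_d.+3 := inord d.
Let pd1 : 'I_d.+3 := inord d.+1.
Let pd2 : 'I_d.+3 := inord d.+2.
Let vpd : nat_of_ord pd = d. Proof. rewrite /pd inordK //; lia. Qed.
Let vpd1 : nat_of_ord pd1 = d.+1. Proof. rewrite /pd1 inordK //; lia. Qed.
Let vpd2 : nat_of_ord pd2 = d.+2. Proof. rewrite /pd2 inordK //; lia. Qed.

Definition sim g h := ~ spoiler_wins D (set_pebble c0 pd (Some (g, h))).

Hypothesis NW : ~ spoiler_wins D.+4 c0.

Lemma sim_l g : exists h, sim g h.
Proof.
apply: NNPP => N; apply: NW; apply: (SW_le (r := D.+1)); first lia.
apply: (SW_left (i := pd) (g := g)) => h; apply: NNPP => S; apply: N; by exists h.
Qed.

Lemma sim_r h : exists g, sim g h.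
Proof.
apply: NNPP => N; apply: NW; apply: (SW_le (r := D.+1)); first lia.
apply: (SW_right (i := pd) (h := h)) => g; apply: NNPP => S; apply: N; by exists g.
Qed.

Lemma sim_uniq g1 g2 h : sim g1 h -> sim g2 h -> g1 = g2.
Proof.
move=> S1 S2; apply: NNPP => ne.
pose c0x : config gT gT d.+3 := fun i => if (i < d)%N then Some (x i, x i) else None.
pose c3 := set_pebble c0x pd (Some (g1, g2)).
have C : comp3 (set_pebble c0 pd (Some (g1, h))) (swapc (set_pebble c0 pd (Some (g2, h)))) c3.
  move=> i; rewrite /c3 /swapc /set_pebble; case: (i == pd).
    right; by exists g1, h, g2.
  rewrite /c0x H0; case: (i < d)%N; [right; by exists (x i), (y i), (x i) | by left].
have N2 : ~ spoiler_wins D (swapc (set_pebble c0 pd (Some (g2, h)))).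
  move=> W; apply: S2; have := SW_swap W; by rewrite swapc_invol.
apply: (SW_trans C S1 N2).
apply: (Hdef g1 c3 pd g2).
- move=> i id; rewrite /c3 set_pebble_ne /c0x ?id //; apply/negP => /eqP E.
  by move: id; rewrite E vpd ltnn.
- by rewrite vpd.
- by apply/eqP => E; apply: ne; rewrite E.
- exact: set_pebble_eq.
Qed.

Lemma nsim_robust g h : ~ sim g h -> forall (c : config gT hT d.+3) (q : 'I_d.+3),
  (forall i : 'I_d.+3, (i < d)%N -> c i = Some (x i, y i)) -> (d <= q)%N ->
  c q = Some (g, h) -> spoiler_wins D c.
Proof.
move=> NS c q G dq Hq.
have W : spoiler_wins D (set_pebble c0 pd (Some (g, h))) by apply: NNPP.
have W' := SW_perm (tperm pd q) W.
apply: SW_ext W' => k p; rewrite /permc.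
case: (eqVneq k q) => [->|nkq].
  by rewrite tpermR set_pebble_eq => <-.
case: (eqVneq k pd) => [Ek|nkp].
  subst k; rewrite tpermL set_pebble_ne; last by rewrite eq_sym.
  by rewrite H0 ltnNge dq.
rewrite tpermD 1?eq_sym //.
rewrite set_pebble_ne // H0; case: ifP => // kd [<-]; exact: G.
Qed.

Definition psi g := epsilon (inhabits (1 : hT)) (sim g).

Lemma psi_sim g : sim g (psi g).
Proof. exact: epsilon_spec (sim_l g). Qed.

Lemma psi_inj : injective psi.
Proof. move=> g1 g2 E; have S2 := psi_sim g2; rewrite -E in S2; exact: sim_uniq _ _ _ (psi_sim g1) S2. Qed.

Lemma sim_psi g h : sim g h -> h = psi g.
Proof.
move=> S.
have /codomP [g0 E] : h \in codom psi by apply: (inj_card_onto psi_inj); rewrite card.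
rewrite E in S *; by rewrite (sim_uniq _ _ _ S (psi_sim g0)).
Qed.

Lemma robust_psi g h (c : config gT hT d.+3) (q : 'I_d.+3) :
  (forall i : 'I_d.+3, (i < d)%N -> c i = Some (x i, y i)) -> (d <= q)%N ->
  c q = Some (g, h) -> h != psi g -> spoiler_wins D c.
Proof.
move=> G dq Hq ne; apply: (nsim_robust g h _ c q G dq Hq) => S.
by move: ne; rewrite (sim_psi g h S) eqxx.
Qed.

Lemma psiM g1 g2 : psi (g1 * g2) = psi g1 * psi g2.
Proof.
apply: NNPP => ne; apply: NW.
have ne01 : pd != pd1 by rewrite -(inj_eq val_inj) /= vpd vpd1; lia.
have ne02 : pd != pd2 by rewrite -(inj_eq val_inj) /= vpd vpd2; lia.
have ne12 : pd1 != pd2 by rewrite -(inj_eq val_inj) /= vpd1 vpd2; lia.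
apply: (SW_left (i := pd) (g := g1)) => h1.
case: (eqVneq h1 (psi g1)) => [->|n1]; last first.
  apply: (SW_le (r := D)); first lia.
  apply: (robust_psi g1 h1 _ pd _ _ _ n1); last exact: set_pebble_eq; last by rewrite vpd; lia.
  move=> i id; rewrite set_pebble_ne ?H0 ?id //; apply/negP => /eqP E; by move: id; rewrite E vpd ltnn.
apply: (SW_left (i := pd1) (g := g2)) => h2.
case: (eqVneq h2 (psi g2)) => [->|n2]; last first.
  apply: (SW_le (r := D)); first lia.
  apply: (robust_psi g2 h2 _ pd1 _ _ _ n2); last exact: set_pebble_eq; last by rewrite vpd1; lia.
  move=> i id; rewrite !set_pebble_ne ?H0 ?id //; apply/negP => /eqP E; by move: id; rewrite E ?vpd ?vpd1; lia.
apply: (SW_left (i := pd2) (g := g1 * g2)) => h3.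
case: (eqVneq h3 (psi (g1 * g2))) => [->|n3]; last first.
  apply: (SW_le (r := D)); first lia.
  apply: (robust_psi (g1 * g2) h3 _ pd2 _ _ _ n3); last exact: set_pebble_eq; last by rewrite vpd2; lia.
  move=> i id; rewrite !set_pebble_ne ?H0 ?id //; apply/negP => /eqP E; by move: id; rewrite E ?vpd ?vpd1 ?vpd2; lia.
have p0 : forall p : 'I_d.+3, (d <= p)%N -> @inord d.+2 0 != p.
  move=> p dp; apply/negP => /eqP E; move: dp; rewrite -E inordK; lia.
apply: (SW_fail (i := inord 0) (a := pd) (b := pd1) (t := pd2)).
- by rewrite (set_pebble_ne _ _ ne02) (set_pebble_ne _ _ ne01) set_pebble_eq.
- by rewrite (set_pebble_ne _ _ ne12) set_pebble_eq.
- exact: set_pebble_eq.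
- by apply: p0; rewrite vpd.
- by apply: p0; rewrite vpd1; lia.
- by apply: p0; rewrite vpd2; lia.
- by move=> [_ [E _]]; apply: ne; symmetry; apply: E.
Qed.

Lemma final_contra : False.
Proof.
apply: niso; apply/isogP.
pose f := @Morphism gT hT [set: gT] psi (in2W psiM).
exists f.
  by apply/injmP => a b _ _; exact: psi_inj.
rewrite morphimEdom; apply/setP => h; rewrite inE; apply/imsetP.
have /codomP [g ->] : h \in codom psi by apply: (inj_card_onto psi_inj); rewrite card.
by exists g; rewrite ?inE.
Qed.

End Final.


Lemma place (gT hT : finGroupType) (d : nat) (x : nat -> gT) (D : nat) :
  (0 < d)%N -> (forall g, Def d x D g) -> #|gT| = #|hT| ->
  ~ ([set: gT] \isog [set: hT]) ->
  forall k j, (j + k = d)%N -> forall (c : config gT hT d.+3) (y : nat -> hT),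
  (forall i : 'I_d.+3, c i = if (i < j)%N then Some (x i, y i) else None) ->
  spoiler_wins (k + D.+4) c.
Proof.
move=> d0 Hdef card niso; elim=> [|k IH] j jk c y Hc.
  rewrite addn0 in jk; subst j; apply: NNPP => NW.
  exact: (final_contra _ _ _ _ _ d0 Hdef card niso _ _ Hc NW).
have jd : (j < d)%N by lia.
pose pj : 'I_d.+3 := inord j.
have vpj : nat_of_ord pj = j by rewrite inordK //; lia.
rewrite addSn; apply: (SW_left (i := pj) (g := x j)) => h.
pose y' := fun t => if t == j then h else y t.
apply: (IH j.+1 _ _ y'); first lia.
move=> i; rewrite /set_pebble /y'.
case: (eqVneq i pj) => [->|ne].
  by rewrite vpj eqxx ltnSn.
have nij : (nat_of_ord i != j) by apply: contra ne => /eqP E; apply/eqP/val_inj; rewrite /= vpj.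
have E : (nat_of_ord i == j) = false by apply/negbTE.
have L : (i < j.+1)%N = (i < j)%N by rewrite ltnS leq_eqVlt E.
by rewrite Hc L E.
Qed.

Lemma small_r (gT : finGroupType) (r : nat) :
  solvability_class gT r -> loglog #|gT| = 0%N -> (r <= 1)%N.
Proof.
move=> [_ minr] ll0.
apply: minr; apply/derG1P.
have L1 : (trunc_log 2 #|gT| <= 1)%N.
  by move: ll0; rewrite /loglog => /eqP; rewrite trunc_log_eq0.
have n4 : (#|gT| < 4)%N.
  have := trunc_log_ltn #|gT| (isT : (1 < 2)%N).
  move=> h; apply: leq_trans h _; rewrite -[4%N]/(2 ^ 2)%N leq_pexp2l //.
have cT : #|[set: gT]| = #|gT| by rewrite cardsT.
have n0 : (0 < #|gT|)%N by rewrite -cT (cardG_gt0 [set: gT]%G).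
case E : #|gT| => [|[|[|[|n]]]]; rewrite E in n0 n4 cT => //.
- by rewrite (card_le1_trivg (G := [set: gT]%G)) ?cT //; exact: abelian1.
- apply: cyclic_abelian; apply: prime_cyclic; by rewrite /= cT.
- apply: cyclic_abelian; apply: prime_cyclic; by rewrite /= cT.
Qed.

Close Scope group_scope.

Theorem theorem3p1 (d : nat) : 1 <= d ->
  exists k C : nat,
    forall (gT hT : finGroupType) (r : nat),
      solvable [set: gT] ->
      generated_by_at_most d gT ->
      solvability_class gT r ->
      ~ ([set: gT] \isog [set: hT]) ->
      cf_WL_I_distinguishes k (C * r * loglog #|gT| + C) gT hT.
Proof.
move=> d1; exists d.+2, (d + 28).
move=> gT hT r _ [X [cX gX]] sc niso.
have [Hr _] := sc.
case: (eqVneq #|gT| #|hT|) => [card|ne]; last by left; apply/eqP.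
right.
pose x := fun i => nth 1%g (enum X) i.
have Hgen : <<[set x (nat_of_ord i) | i : 'I_d]>>%g = [set: gT].
  apply/eqP; rewrite eqEsubset subsetT /= -gX genS //.
  apply/subsetP => a aX; apply/imsetP.
  have ia : (index a (enum X) < d)%N.
    by apply: leq_trans cX; rewrite cardE index_mem mem_enum.
  exists (Ordinal ia) => //; by rewrite /x /= nth_index // mem_enum.
have Hdef := all_def d1 Hgen Hr.
set D := (1 + r * (7 * JJ gT + 14))%N in Hdef.
have W' : spoiler_wins (d + D.+4) (@empty_config gT hT d.+3).
  refine (place d1 Hdef card niso (add0n d) (y := fun _ => 1%g) _).
  by move=> i; rewrite ltn0.
apply: SW_le W'.
rewrite /D; have -> : JJ gT = (loglog #|gT|).+1 by [].
set ll := loglog #|gT|.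
case: (posnP ll) => [ll0|llp].
  have := small_r sc ll0; rewrite ll0; nia.
nia.
Qed.
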